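(* Let $n$ agents share an additive valuation $v$ and suppose there are $0<L\le R$ with $v(g)\in[L,R]$ for every item $g$. Consider the online algorithm that in each round $t$ outputs $A^t=$ the allocation returned by Algorithm 3 run on $M_t=\{g_1,\dots,g_t\}$. Then every $A^t$ is a contiguous EF1 allocation of $M_t$, and the total number of adjustments is $O\!\left(\frac{R}{L}n^2T\right)$.
   Context: Items $g_1,\dots,g_T$ arrive online on a line. Contiguous allocation: agent $j$ receives the $j$-th block from the left. For a contiguous allocation $A$, $P(A)=(\ell_0,\dots,\ell_n)$ with $\ell_0=0$ and $P_j(A)$ the index of the last item of $A_j$. Leximin allocation: contiguous allocation maximizing the lowest agent value, then the second-lowest, and so on; the leximin$^2$ allocation is the leximin one with lexicographically smallest $P(A)$. Algorithm 3 (input $v$, item line $M$): let $A$ be the contiguous leximin$^2$ allocation of $M$; fix $i\in\arg\min_j v(A_j)$; for $j=1,\dots,i-1$ in order, while agent $i$ envies agent $j$ even up to one item, move the rightmost item of $A_j$ to $A_{j+1}$; then for $j=n,\dots,i+1$ in order, while agent $i$ envies agent $j$ even up to one item, move the leftmost item of $A_j$ to $A_{j-1}$; return $A$. Agent $i$ envies agent $j$ even up to one item if $A_j\neq\emptyset$ and $v(A_i)<v(A_j\setminus\{g\})$ for all $g\in A_j$. EF1: for all $i,j$, $A_j=\emptyset$ or some $g\in A_j$ has $v(A_i)\ge v(A_j\setminus\{g\})$. The number of adjustments is $\sum_{t=1}^{T-1}|\{g\in M_t: g \text{ is assigned to different agents in } A^t, A^{t+1}\}|$. *)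

(* Defs.v *)
(* Items are numbered 1,2,...; an allocation of M_t = {g_1..g_t}
   to agents 1..n is contiguous and represented by its cut vector
   P = [:: l_0; l_1; ...; l_n] with l_0 = 0, l_n = t, nondecreasing;
   agent j (1 <= j <= n) receives the items k with l_(j-1) < k <= l_j. *)
From mathcomp Require Import all_boot all_order all_algebra.
From mathcomp Require Import reals.
Set Implicit Arguments. Unset Strict Implicit. Unset Printing Implicit Defensive.
Import Order.TTheory GRing.Theory Num.Theory.
Local Open Scope ring_scope.

Definition cut (P : seq nat) (j : nat) : nat := nth 0%N P j.

Definition block (P : seq nat) (j : nat) : seq nat :=
  iota (cut P j.-1).+1 (cut P j - cut P j.-1).

Definition bval (F : numDomainType) (v : nat -> F) (P : seq nat) (j : nat) : F :=
  \sum_(k <- block P j) v k.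

Definition bval_minus (F : numDomainType) (v : nat -> F) (P : seq nat) (j g : nat) : F :=
  \sum_(k <- block P j | k != g) v k.

Definition is_cuts (n t : nat) (P : seq nat) : Prop :=
  [/\ size P = n.+1, cut P 0 = 0%N, cut P n = t & sorted leq P].

Definition vals (F : numDomainType) (v : nat -> F) (n : nat) (P : seq nat) : seq F :=
  [seq bval v P j | j <- iota 1 n].
Definition sortv (F : numDomainType) (v : nat -> F) (n : nat) (P : seq nat) : seq F :=
  sort <=%R (vals v n P).

Fixpoint lexle (T : eqType) (lt : rel T) (s1 s2 : seq T) : bool :=
  match s1, s2 with
  | x :: s1', y :: s2' => lt x y || ((x == y) && lexle lt s1' s2')
  | _, _ => true
  end.

Definition is_leximin2 (F : realDomainType) (v : nat -> F) (n t : nat) (P : seq nat) : Prop :=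
  is_cuts n t P /\
  forall Q, is_cuts n t Q ->
    lexle <%R (sortv v n Q) (sortv v n P) /\
    (sortv v n Q = sortv v n P -> lexle ltn P Q).

Definition is_min_agent (F : realDomainType) (v : nat -> F) (n : nat) (P : seq nat) (i : nat) : Prop :=
  (1 <= i <= n)%N /\ forall j, (1 <= j <= n)%N -> bval v P i <= bval v P j.

Definition envies1 (F : realDomainType) (v : nat -> F) (P : seq nat) (i j : nat) : bool :=
  (block P j != [::]) && all (fun g => bval v P i < bval_minus v P j g) (block P j).

(* while loop with explicit fuel (fuel t.+1 suffices below, since each iteration
   removes one item from a nonempty block of size <= t) *)
Fixpoint while_loop (fuel : nat) (c : seq nat -> bool) (f : seq nat -> seq nat)
  (s : seq nat) : seq nat :=
  match fuel with
  | 0 => s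
  | k.+1 => if c s then while_loop k c f (f s) else s
  end.

Definition move_right (P : seq nat) (j : nat) : seq nat := set_nth 0%N P j (cut P j).-1.
Definition move_left (P : seq nat) (j : nat) : seq nat := set_nth 0%N P j.-1 (cut P j.-1).+1.

Definition alg3 (F : realDomainType) (v : nat -> F) (n t : nat) (P : seq nat) (i : nat) : seq nat :=
  let P1 := foldl (fun Q j => while_loop t.+1 (fun Q' => envies1 v Q' i j)
                                (fun Q' => move_right Q' j) Q) P (iota 1 i.-1) in
  foldl (fun Q j => while_loop t.+1 (fun Q' => envies1 v Q' i j)
                       (fun Q' => move_left Q' j) Q) P1 (rev (iota i.+1 (n - i))).

Definition EF1 (F : realDomainType) (v : nat -> F) (n : nat) (P : seq nat) : Prop :=
  forall i j, (1 <= i <= n)%N -> (1 <= j <= n)%N ->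
    block P j = [::] \/ exists2 g, g \in block P j & bval_minus v P j g <= bval v P i.

Definition owner (P : seq nat) (g : nat) : nat := find (fun l => g <= l)%N P.

Definition adjustments (T : nat) (A : nat -> seq nat) : nat :=
  (\sum_(1 <= t < T) count (fun g => owner (A t) g != owner (A t.+1) g) (iota 1 t))%N.

(* Main.v *)
Require Import Defs.
From mathcomp Require Import all_boot all_order all_algebra.
From mathcomp Require Import reals.
From mathcomp Require Import ring lra zify.

Module PartA.
Set Implicit Arguments. Unset Strict Implicit. Unset Printing Implicit Defensive.
Import Order.TTheory GRing.Theory Num.Theory.

Section Cuts.
Variables (n t : nat).

Lemma cut_mono Q a b : is_cuts n t Q -> (a <= b)%N -> (b <= n)%N -> (cut Q a <= cut Q b)%N.
Proof.
case=> sz c0 cn srt ab bn.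
apply: (sorted_leq_nth leq_trans leqnn 0 srt) => //; rewrite inE sz; lia.
Qed.

Lemma cut_le_t Q k : is_cuts n t Q -> (k <= n)%N -> (cut Q k <= t)%N.
Proof. move=> c kn; have := cut_mono c kn (leqnn n); case: c => _ _ -> _ //. Qed.

Lemma mem_block Q k g : g \in block Q k -> (cut Q k.-1 < g <= cut Q k)%N.
Proof. rewrite /block mem_iota; lia. Qed.

Lemma cut_set Q j y k : cut (set_nth 0%N Q j y) k = if k == j then y else cut Q k.
Proof. by rewrite /cut nth_set_nth. Qed.

Lemma is_cuts_set Q j y : is_cuts n t Q -> (0 < j < n)%N ->
  (cut Q j.-1 <= y <= cut Q j.+1)%N -> is_cuts n t (set_nth 0%N Q j y).
Proof.
move=> c jn yb; have c' := c; case: c' => sz c0 cn srt.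
have szs : size (set_nth 0%N Q j y) = n.+1 by rewrite size_set_nth sz; apply/maxn_idPr; lia.
split => //.
- by rewrite cut_set; case: ifP => // /eqP; lia.
- by rewrite cut_set; case: ifP => // /eqP; lia.
apply/(sortedP 0%N) => k; rewrite szs => kn.
have := cut_set Q j y k; have := cut_set Q j y k.+1; rewrite /cut => -> ->.
have m1 := cut_mono c (leqnSn k) kn.
have m2 : (k.+1 == j) -> (cut Q j.-1 <= cut Q k)%N by move/eqP=> <-; rewrite /=.
have m3 : (k == j) -> (cut Q k.+1 <= cut Q j.+1)%N by move/eqP=> ->.
rewrite /cut in m1 m2 m3.
case: eqP => [E|NE]; case: eqP => [E1|NE1] //.
- by subst k; move: yb; rewrite /cut; lia.
- by move: yb; rewrite /cut -E1 /=; lia.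


Qed.

Lemma block_eq Q Q' k : cut Q k.-1 = cut Q' k.-1 -> cut Q k = cut Q' k -> block Q k = block Q' k.
Proof. by rewrite /block => -> ->. Qed.

End Cuts.

End PartA.
Import PartA.

Module PartB.
Set Implicit Arguments. Unset Strict Implicit. Unset Printing Implicit Defensive.
Import Order.TTheory GRing.Theory Num.Theory.
Local Open Scope ring_scope.

Section Vals.
Variables (F : realDomainType) (v : nat -> F).

Lemma bval_nat Q k : bval v Q k = \sum_((cut Q k.-1).+1 <= g < (cut Q k).+1) v g.
Proof. by rewrite /bval /block /index_iota subSS. Qed.

Lemma bval_minus_nat Q k x : bval_minus v Q k x =
  \sum_((cut Q k.-1).+1 <= g < (cut Q k).+1 | g != x) v g.
Proof. by rewrite /bval_minus /block /index_iota subSS. Qed.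

Lemma bval_mr Q j : (0 < j)%N -> (cut Q j.-1 < cut Q j)%N ->
  bval v (move_right Q j) j = bval_minus v Q j (cut Q j).
Proof.
move=> j0 cd; rewrite bval_nat bval_minus_nat /move_right !cut_set eqxx.
have -> : (j.-1 == j) = false by apply/eqP; lia.
rewrite prednK; last lia.
rewrite [RHS]big_mkcond [RHS]big_nat_recr /=; last lia.
rewrite eqxx addr0; apply: eq_big_nat => g /andP[_ gd].
by rewrite neq_ltn gd.
Qed.

Lemma bval_mr_next Q j : (0 < j)%N -> (cut Q j.-1 < cut Q j)%N ->
  (cut Q j <= cut Q j.+1)%N ->
  bval v (move_right Q j) j.+1 = v (cut Q j) + bval v Q j.+1.
Proof.
move=> j0 cd de; rewrite !bval_nat /move_right !cut_set /= eqxx.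
have -> : (j.+1 == j) = false by apply/eqP; lia.
rewrite prednK; last lia.
by rewrite big_ltn.
Qed.

Lemma bval_ml Q j : (1 < j)%N -> (cut Q j.-1 < cut Q j)%N ->
  bval v (move_left Q j) j = bval_minus v Q j (cut Q j.-1).+1.
Proof.
move=> j1 cd; rewrite bval_nat bval_minus_nat /move_left !cut_set eqxx.
have -> : (j == j.-1) = false by apply/eqP; lia.
rewrite [RHS]big_mkcond [RHS]big_ltn /=; last lia.
rewrite eqxx add0r; apply: eq_big_nat => g /andP[cg _].
by have -> : (g != (cut Q j.-1).+1) by apply/eqP; lia.
Qed.

Lemma bval_ml_prev Q j : (1 < j)%N -> (cut Q (j.-1).-1 <= cut Q j.-1)%N ->
  bval v (move_left Q j) j.-1 = bval v Q j.-1 + v (cut Q j.-1).+1.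
Proof.
move=> j1 bc; rewrite !bval_nat /move_left !cut_set eqxx.
have -> : ((j.-1).-1 == j.-1) = false by apply/eqP; lia.
by rewrite big_nat_recr.
Qed.

End Vals.

End PartB.
Import PartB.

Module PartC.
Set Implicit Arguments. Unset Strict Implicit. Unset Printing Implicit Defensive.
Import Order.TTheory GRing.Theory Num.Theory.
Local Open Scope ring_scope.

Section Lex.
Variable (F : realDomainType).

Lemma lex_count (m : F) (s s' : seq F) : sorted <=%R s ->
  all (fun x => m <= x) s -> all (fun x => m <= x) s' -> size s = size s' ->
  (count (fun x => (x <= m)%R) s' < count (fun x => (x <= m)%R) s)%N -> ~~ lexle <%R s' s.
Proof.
elim: s s' => [|a s1 IH] [|b s1'] //= srt /andP[ma ms1] /andP[mb ms1'] [sz] cnt.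
have pa := order_path_min le_trans srt.
have am : a = m.
  apply/eqP; rewrite eq_le ma andbT; apply: contraTT cnt => /negP ltma.
  have -> : (a <= m) = false by apply/negP.
  have -> : count (fun x => (x <= m)%R) s1 = 0%N.
    apply/eqP; rewrite -leqn0 leqNgt -has_count; apply/hasPn => x xs.
    have ax := allP pa x xs; apply/negP => xm; apply: ltma; exact: le_trans ax xm.
  by [].

subst a.
case: (ltrgtP b m) => [bm|bm|bm].
- by move: mb; rewrite leNgt bm.
- by [].
apply: IH => //.
- exact: path_sorted srt.
- by move: cnt; rewrite bm lexx /=.
Qed.

Lemma count_lt (T : eqType) (s : seq T) (a b : pred T) :
  (forall x, x \in s -> a x -> b x) -> (exists2 x, x \in s & b x && ~~ a x) ->
  (count a s < count b s)%N.
Proof.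
have weak : forall s0 : seq T, (forall x, x \in s0 -> a x -> b x) -> (count a s0 <= count b s0)%N.
  elim=> [|y s0 IH] //= H; rewrite leq_add //; last by apply: IH => x xs; apply: H; rewrite inE xs orbT.
  by case ay: (a y) => //; rewrite (H y) // mem_head.
elim: s => [|y s IH] H [x xs xab] //=.
move: xs xab; rewrite inE => /orP[/eqP ->|xs] xab.
  move: xab => /andP[-> /negbTE ->] /=; rewrite add0n ltnS; apply: weak => z zs; apply: H.
  by rewrite inE zs orbT.
rewrite -addnS leq_add //.
  by case ay: (a y) => //; rewrite (H y) // mem_head.
apply: IH; last by exists x.
by move=> z zs; apply: H; rewrite inE zs orbT.
Qed.


Lemma lexmin_contra (v : nat -> F) n t P Q i : is_leximin2 v n t P -> is_min_agent v n P i ->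
  is_cuts n t Q ->
  (forall k, (1 <= k <= n)%N -> bval v Q k = bval v P k \/ bval v P i < bval v Q k) ->
  bval v P i < bval v Q i -> False.
Proof.
move=> [cP lex] [iin imin] cQ Hk Hi.
have [H _] := lex Q cQ.
set m := bval v P i.
suff: ~~ lexle <%R (sortv v n Q) (sortv v n P) by rewrite H.
have allQ : all (fun x => m <= x) (vals v n Q).
  apply/allP => x /mapP [k]; rewrite mem_iota => kr ->.
  have kr' : (1 <= k <= n)%N by lia.
  case: (Hk k kr') => [->|/ltW //]; exact: imin.
have allP' : all (fun x => m <= x) (vals v n P).
  apply/allP => x /mapP [k]; rewrite mem_iota => kr ->; apply: imin; lia.
apply: (@lex_count m).
- rewrite /sortv; apply: sort_sorted => x y; exact: le_total.
- by rewrite /sortv (perm_all _ (permEl (perm_sort _ _))).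
- by rewrite /sortv (perm_all _ (permEl (perm_sort _ _))).
- by rewrite !size_sort !size_map.
rewrite /sortv !(permP (permEl (perm_sort _ _))) /vals !count_map.
apply: count_lt.
- move=> k; rewrite mem_iota => kr /=; have kr' : (1 <= k <= n)%N by lia.
  case: (Hk k kr') => [-> //|lt le]; move: (lt_le_trans lt le); by rewrite ltxx.
exists i; first by rewrite mem_iota; lia.
by rewrite /= lexx /= -ltNge.
Qed.

End Lex.

End PartC.
Import PartC.

Module PartD.
Set Implicit Arguments. Unset Strict Implicit. Unset Printing Implicit Defensive.
Import Order.TTheory GRing.Theory Num.Theory.
Local Open Scope ring_scope.

Section Alg.
Variables (F : realDomainType) (v : nat -> F) (n t : nat) (P : seq nat) (i : nat).
Hypothesis Hlex : is_leximin2 v n t P.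
Hypothesis Hmin : is_min_agent v n P i.
Hypothesis Hpos : forall g, (1 <= g <= t)%N -> 0 < v g.

Definition Inv Q := [/\ is_cuts n t Q,
  forall k, (1 <= k <= n)%N -> bval v Q k = bval v P k \/ bval v P i < bval v Q k,
  cut Q i.-1 = cut P i.-1 & cut Q i = cut P i].

Lemma Inv_bi Q : Inv Q -> bval v Q i = bval v P i.
Proof. by case=> _ _ c1 c2; rewrite /bval (block_eq c1 c2). Qed.

Lemma Inv_ge Q k : Inv Q -> (1 <= k <= n)%N -> bval v P i <= bval v Q k.
Proof.
case: Hmin => _ imin [_ vQ _ _] kn; case: (vQ k kn) => [->|/ltW //]; exact: imin.
Qed.

Lemma envies_cd Q j : envies1 v Q i j -> (cut Q j.-1 < cut Q j)%N.
Proof.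
case/andP=> ne _; have : (0 < size (block Q j))%N by rewrite lt0n size_eq0.
rewrite size_iota; lia.
Qed.

Lemma step_left Q j : Inv Q -> (0 < j)%N -> (j < i)%N -> envies1 v Q i j ->
  Inv (move_right Q j) /\ (j.+1 < i)%N.
Proof.
move=> IQ j0 ji env; have cd := envies_cd env.
have IQ' := IQ; case: IQ' => cQ vQ ci1 ci.
case/andP: env => _ /allP al.
have [iin imin] := Hmin.
set d := cut Q j.
have dmem : d \in block Q j by rewrite /block mem_iota; lia.
have dt : (d <= t)%N by apply: (cut_le_t cQ); lia.
have bi := Inv_bi IQ.
have h1 : bval v P i < bval v (move_right Q j) j by rewrite bval_mr // -bi; exact: al.
have cjn : (cut Q j <= cut Q j.+1)%N by apply: (cut_mono cQ) => //; lia.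
have h2 : bval v P i < bval v (move_right Q j) j.+1.
  rewrite bval_mr_next //; have := Inv_ge IQ (_ : (1 <= j.+1 <= n)%N).
  have := Hpos (_ : (1 <= d <= t)%N); move=> p1 p2.
  have q1 := p1 ltac:(lia); have q2 := p2 ltac:(lia); lra.
have cQ1 : is_cuts n t (move_right Q j).
  apply: is_cuts_set => //; [lia|lia].
have oth : forall k, k != j -> k != j.+1 -> bval v (move_right Q j) k = bval v Q k.
  move=> k /eqP kj /eqP kj1.
  have e1 : cut (move_right Q j) k.-1 = cut Q k.-1 by rewrite cut_set; case: ifP => // /eqP; lia.
  have e2 : cut (move_right Q j) k = cut Q k by rewrite cut_set; case: ifP => // /eqP; lia.
  by rewrite /bval (block_eq e1 e2).
have vQ1 : forall k, (1 <= k <= n)%N -> bval v (move_right Q j) k = bval v P k \/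
    bval v P i < bval v (move_right Q j) k.
  move=> k kn; case: (eqVneq k j) => [->|kj]; first by right.
  case: (eqVneq k j.+1) => [->|kj1]; first by right.
  by rewrite oth //; apply: vQ.
have ji1 : (j.+1 < i)%N.
  rewrite ltn_neqAle ji andbT; apply/eqP => E.
  apply: (lexmin_contra Hlex Hmin cQ1 vQ1); by move: h2; rewrite E.
split => //; split => //; rewrite /move_right cut_set.
- by have -> : (i.-1 == j) = false by apply/eqP; lia.
- by have -> : (i == j) = false by apply/eqP; lia.
Qed.


Lemma step_right Q j : Inv Q -> (i < j)%N -> (j <= n)%N -> envies1 v Q i j ->
  Inv (move_left Q j) /\ (i < j.-1)%N.
Proof.
move=> IQ ij jn env; have cd := envies_cd env.
have IQ' := IQ; case: IQ' => cQ vQ ci1 ci.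
case/andP: env => _ /allP al.
have [iin imin] := Hmin.
set c := cut Q j.-1.
have cmem : c.+1 \in block Q j by rewrite /block mem_iota; lia.
have dt : (cut Q j <= t)%N by apply: (cut_le_t cQ); lia.
have bi := Inv_bi IQ.
have h1 : bval v P i < bval v (move_left Q j) j by rewrite bval_ml //; [rewrite -bi; exact: al|lia].
have cjn : (cut Q (j.-1).-1 <= cut Q j.-1)%N by apply: (cut_mono cQ); lia.
have h2 : bval v P i < bval v (move_left Q j) j.-1.
  rewrite bval_ml_prev //; last lia.
  have := Inv_ge IQ (_ : (1 <= j.-1 <= n)%N).
  have := Hpos (_ : (1 <= c.+1 <= t)%N); move=> p1 p2.
  have q1 := p1 ltac:(lia); have q2 := p2 ltac:(lia); lra.
have cQ1 : is_cuts n t (move_left Q j).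
  apply: is_cuts_set => //; first lia.
  rewrite prednK; last lia.
  apply/andP; split; [exact: leqW|exact: cd].
have oth : forall k, k != j -> k != j.-1 -> bval v (move_left Q j) k = bval v Q k.
  move=> k /eqP kj /eqP kj1.
  have e1 : cut (move_left Q j) k.-1 = cut Q k.-1 by rewrite cut_set; case: ifP => // /eqP; lia.
  have e2 : cut (move_left Q j) k = cut Q k by rewrite cut_set; case: ifP => // /eqP; lia.
  by rewrite /bval (block_eq e1 e2).
have vQ1 : forall k, (1 <= k <= n)%N -> bval v (move_left Q j) k = bval v P k \/
    bval v P i < bval v (move_left Q j) k.
  move=> k kn; case: (eqVneq k j) => [->|kj]; first by right.
  case: (eqVneq k j.-1) => [->|kj1]; first by right.
  by rewrite oth //; apply: vQ.
have ji1 : (i < j.-1)%N.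
  have : (i <= j.-1)%N by lia.
  rewrite leq_eqVlt => /orP[/eqP E|//].
  apply: False_ind; apply: (lexmin_contra Hlex Hmin cQ1 vQ1); by move: h2; rewrite -E.
split => //; split => //; rewrite /move_left cut_set.
- by have -> : (i.-1 == j.-1) = false by apply/eqP; lia.
- by have -> : (i == j.-1) = false by apply/eqP; lia.
Qed.


Lemma block_set Q p y k : k.-1 != p -> k != p -> block (set_nth 0%N Q p y) k = block Q k.
Proof. by move=> h1 h2; apply: block_eq; rewrite cut_set ?(negbTE h1) ?(negbTE h2). Qed.

Lemma envies_same Q Q' k : block Q i = block Q' i -> block Q k = block Q' k ->
  envies1 v Q i k = envies1 v Q' i k.
Proof. by rewrite /envies1 /bval_minus /bval => -> ->. Qed.

Lemma loop_left j fuel Q : (0 < j)%N -> (j < i)%N -> Inv Q -> (size (block Q j) < fuel)%N ->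
  (forall k, (0 < k < j)%N -> ~~ envies1 v Q i k) ->
  let Q' := while_loop fuel (fun Q' => envies1 v Q' i j) (fun Q' => move_right Q' j) Q in
  Inv Q' /\ (forall k, (0 < k <= j)%N -> ~~ envies1 v Q' i k).
Proof.
move=> j0 ji; elim: fuel Q => [|f IH] Q IQ sz NEs //=.
case: ifP => env.
  have [IQ1 j1] := step_left IQ j0 ji env.
  have cd := envies_cd env.
  apply: IH => //.
    rewrite /block size_iota /move_right !cut_set eqxx.
    have -> : (j.-1 == j) = false by apply/eqP; lia.
    move: sz; rewrite /block size_iota; lia.
  move=> k kr; rewrite (@envies_same _ Q).
  - exact: NEs.
  - by rewrite /move_right block_set //; apply/eqP; lia.
  - by rewrite /move_right block_set //; apply/eqP; lia.
split => // k kr; case: (eqVneq k j) => [->|kj]; first by rewrite env.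
apply: NEs; lia.
Qed.

Lemma loop_right j fuel Q : (i < j)%N -> (j <= n)%N -> Inv Q -> (size (block Q j) < fuel)%N ->
  (forall k, ((0 < k < i) || (j < k <= n))%N -> ~~ envies1 v Q i k) ->
  let Q' := while_loop fuel (fun Q' => envies1 v Q' i j) (fun Q' => move_left Q' j) Q in
  Inv Q' /\ (forall k, ((0 < k < i) || (j <= k <= n))%N -> ~~ envies1 v Q' i k).
Proof.
move=> ij jn; elim: fuel Q => [|f IH] Q IQ sz NEs //=.
case: ifP => env.
  have [IQ1 j1] := step_right IQ ij jn env.
  have cd := envies_cd env.
  apply: IH => //.
    rewrite /block size_iota /move_left !cut_set eqxx.
    have -> : (j == j.-1) = false by apply/eqP; lia.
    move: sz; rewrite /block size_iota; lia.
  move=> k kr; rewrite (@envies_same _ Q).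
  - exact: NEs.
  - by rewrite /move_left block_set //; apply/eqP; lia.
  - by rewrite /move_left block_set //; apply/eqP; lia.
split => // k kr; case: (eqVneq k j) => [->|kj]; first by rewrite env.
apply: NEs; lia.
Qed.

Lemma size_block_le Q j : Inv Q -> (j <= n)%N -> (size (block Q j) < t.+1)%N.
Proof.
case=> cQ _ _ _ jn; rewrite /block size_iota ltnS.
have := cut_le_t cQ jn; lia.
Qed.

Lemma fold_left b a Q : (0 < a)%N -> (a + b <= i)%N -> Inv Q ->
  (forall k, (0 < k < a)%N -> ~~ envies1 v Q i k) ->
  let Q' := foldl (fun Q j => while_loop t.+1 (fun Q' => envies1 v Q' i j)
                                (fun Q' => move_right Q' j) Q) Q (iota a b) in
  Inv Q' /\ (forall k, (0 < k < a + b)%N -> ~~ envies1 v Q' i k).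
Proof.
elim: b a Q => [|b IH] a Q a0 abi IQ NEs /=; first by rewrite addn0.
have [||I1 N1] := @loop_left a t.+1 Q a0 _ IQ _ NEs; first lia.
  by apply: size_block_le => //; case: Hmin; lia.
rewrite -addSnnS; apply: IH => //; first lia.
Qed.

Lemma fold_right b Q : (i.+1 + b <= n.+1)%N -> Inv Q ->
  (forall k, ((0 < k < i) || (i.+1 + b <= k <= n))%N -> ~~ envies1 v Q i k) ->
  let Q' := foldl (fun Q j => while_loop t.+1 (fun Q' => envies1 v Q' i j)
                       (fun Q' => move_left Q' j) Q) Q (rev (iota i.+1 b)) in
  Inv Q' /\ (forall k, ((0 < k < i) || (i.+1 <= k <= n))%N -> ~~ envies1 v Q' i k).
Proof.
elim: b Q => [|b IH] Q bn IQ NEs; first by split => //= k kr; apply: NEs; lia.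
rewrite (_ : iota i.+1 b.+1 = iota i.+1 b ++ [:: i.+1 + b]); last by rewrite -[b.+1]addn1 iotaD.
rewrite rev_cat /=.
have [||||I1 N1] := @loop_right (i.+1 + b) t.+1 Q _ _ IQ _ _; try lia.
- by apply: size_block_le => //; lia.
- by move=> k kr; apply: NEs; lia.
apply: IH => //; first lia.
Qed.

Lemma alg3_EF1 : is_cuts n t (alg3 v n t P i) /\ EF1 v n (alg3 v n t P i).
Proof.
have [cP _] := Hlex; have [iin imin] := Hmin.
have IP : Inv P by split => // k _; left.
have [I1 N1] := @fold_left i.-1 1 P isT ltac:(lia) IP ltac:(move=> k; lia).
have [I2 N2] := @fold_right (n - i) _ ltac:(lia) I1 ltac:(move=> k kr; apply: N1; lia).
rewrite /alg3; set Q := foldl _ _ _ in I2 N2 *.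
split; first by case: I2.
move=> a b ha hb.
have bi := Inv_bi I2.
case: (eqVneq b i) => [->|bni].
  case E: (block Q i) => [|g s]; first by left.
  right; exists g; first by rewrite mem_head.
  apply: (@le_trans _ _ (bval v Q i)); last by rewrite bi; apply: Inv_ge.
  rewrite /bval_minus /bval [X in X <= _]big_mkcond /= big_seq [X in _ <= X]big_seq.
  apply: ler_sum => k kin.
  case: ifP => // _; apply: ltW; apply: Hpos.
  have := mem_block kin; case: I2 => cQ _ _ _; have := cut_le_t cQ (_ : (i <= n)%N).
  move=> h; have := h ltac:(lia); lia.
have := N2 b ltac:(lia); rewrite negb_and negbK => /orP[/eqP ->|/allPn [g gin hg]]; first by left.
right; exists g => //; apply: (@le_trans _ _ (bval v Q i)); first by rewrite -leNgt in hg.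
by rewrite bi; apply: Inv_ge.
Qed.

End Alg.

End PartD.
Import PartD.

Module PartE.
Set Implicit Arguments. Unset Strict Implicit. Unset Printing Implicit Defensive.
Import Order.TTheory GRing.Theory Num.Theory.
Local Open Scope ring_scope.

Section Num.
Variables (F : realFieldType) (v : nat -> F) (n T : nat) (L R : F).
Hypothesis n0 : (0 < n)%N.
Hypothesis L0 : 0 < L.
Hypothesis LR : L <= R.
Hypothesis Hv : forall g, (1 <= g <= T)%N -> L <= v g <= R.

Definition Spre x := \sum_(1 <= g < x.+1) v g.

Lemma S_cut t Q j : is_cuts n t Q -> (j <= n)%N -> Spre (cut Q j) = \sum_(1 <= k < j.+1) bval v Q k.
Proof.
move=> cQ; elim: j => [|j IH] jn.
  by case: cQ => _ -> _ _; rewrite /Spre !big_geq.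
rewrite big_nat_recr //= -IH; last lia.
rewrite bval_nat /Spre /=.
have := cut_mono cQ (leqnSn j) jn; move=> h.
by rewrite (@big_cat_nat _ _ _ (cut Q j).+1).
Qed.

Lemma S_diff x y : (x <= y)%N -> (y <= T)%N -> (y - x)%:R * L <= Spre y - Spre x.
Proof.
move=> xy yT; rewrite /Spre (@big_cat_nat _ _ _ x.+1) //= addrC addrK.
have -> : (y - x)%:R * L = \sum_(x.+1 <= g < y.+1) L by rewrite sumr_const_nat subSS mulr_natl.
apply: ler_sum_nat => g gr; have := Hv (_ : (1 <= g <= T)%N); move=> h.
by case/andP: (h ltac:(lia)).
Qed.

Lemma EF1_close t Q a b : (t <= T)%N -> is_cuts n t Q -> EF1 v n Q ->
  (1 <= a <= n)%N -> (1 <= b <= n)%N -> bval v Q b <= bval v Q a + R.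
Proof.
move=> tT cQ ef ha hb.
have itm : forall k g, (k <= n)%N -> g \in block Q k -> L <= v g <= R.
  move=> k g kn gin; apply: Hv; have := mem_block gin; have := cut_le_t cQ kn; lia.
have ge0 : forall k, (k <= n)%N -> 0 <= bval v Q k.
  move=> k kn; rewrite /bval big_seq; apply: sumr_ge0 => g gin.
  have /andP[h _] := itm k g kn gin; exact: le_trans (ltW L0) h.
case: (ef a b ha hb) => [E|[g gin hg]].
  have L0' : 0 < L by exact: L0. have LR' : L <= R by exact: LR.
  rewrite [bval v Q b]/bval E big_nil; have := ge0 a ltac:(lia); lra.
rewrite [bval v Q b]/bval (bigD1_seq g) //=; last exact: iota_uniq.
have /andP[_ h] := itm b g ltac:(lia) gin.
rewrite /bval_minus in hg; lra.
Qed.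

Lemma sum_bounds t Q j : (t <= T)%N -> is_cuts n t Q -> EF1 v n Q -> (j <= n)%N ->
  j%:R * (bval v Q 1 - R) <= \sum_(1 <= k < j.+1) bval v Q k <= j%:R * (bval v Q 1 + R).
Proof.
move=> tT cQ ef jn; apply/andP; split.
  have -> : j%:R * (bval v Q 1 - R) = \sum_(1 <= k < j.+1) (bval v Q 1 - R)
    by rewrite sumr_const_nat subn1 mulr_natl.
  apply: ler_sum_nat => k kr; have := EF1_close tT cQ ef (_ : (1 <= k <= n)%N) (_ : (1 <= 1 <= n)%N).
  move=> h; have := h ltac:(lia) ltac:(lia); lra.
have -> : j%:R * (bval v Q 1 + R) = \sum_(1 <= k < j.+1) (bval v Q 1 + R)
  by rewrite sumr_const_nat subn1 mulr_natl.
apply: ler_sum_nat => k kr; have := EF1_close tT cQ ef (_ : (1 <= 1 <= n)%N) (_ : (1 <= k <= n)%N).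
move=> h; have := h ltac:(lia) ltac:(lia); lra.
Qed.

Lemma dev_bound t Q j : (t <= T)%N -> is_cuts n t Q -> EF1 v n Q -> (j <= n)%N ->
  `|n%:R * Spre (cut Q j) - j%:R * Spre t| <= 2%:R * n%:R ^+ 2 * R.
Proof.
move=> tT cQ ef jn.
have cn : cut Q n = t by case: cQ.
have e1 := S_cut cQ jn; have e2 := S_cut cQ (leqnn n); rewrite cn in e2.
have [b1 b2] := andP (sum_bounds tT cQ ef jn).
have [b3 b4] := andP (sum_bounds tT cQ ef (leqnn n)).
rewrite -e1 in b1 b2; rewrite -e2 in b3 b4.
have jn' : j%:R <= n%:R :> F by rewrite ler_nat.
have j0 : 0 <= j%:R :> F by rewrite ler0n.
have R0 : 0 <= R by apply: le_trans (ltW L0) LR.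
set X := Spre (cut Q j) in b1 b2 *; set Y := Spre t in b3 b4 *; set W := bval v Q 1 in b1 b2 b3 b4.
rewrite ler_norml; apply/andP; split; nra.
Qed.


Lemma fin_arith (N J Sx Sy St V d LL RR : F) : 1 <= N -> 0 <= J -> J <= N -> 0 <= V -> V <= RR ->
  0 <= RR -> 
  -(2%:R * N ^+ 2 * RR) <= N * Sx - J * St -> N * Sy - J * (St + V) <= 2%:R * N ^+ 2 * RR ->
  d * LL <= Sy - Sx -> LL * d <= 5%:R * N * RR.
Proof.
move=> N1 J0 JN V0 VR R0 d1 d4 sd.
have N0 : 0 < N by lra.
have h2 : J * V <= N * RR by apply: ler_pM.
have h3 : N * RR <= N ^+ 2 * RR.
  rewrite expr2 -mulrA ler_peMl //; first by apply: mulr_ge0; lra.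
have h4 : N * (d * LL) <= N * (Sy - Sx) by rewrite ler_pM2l.
rewrite -(ler_pM2l N0).
have -> : N * (5%:R * N * RR) = 5%:R * (N ^+ 2 * RR) by rewrite expr2; ring.
rewrite mulrC.
have e : N * (Sy - Sx) = (N * Sy - J * (St + V)) - (N * Sx - J * St) + J * V by ring.
lra.
Qed.
Lemma fin_arith2 (N J Sx Sy St V d LL RR : F) : 1 <= N -> 0 <= J -> J <= N -> 0 <= V -> V <= RR ->
  0 <= RR -> 
  N * Sx - J * St <= 2%:R * N ^+ 2 * RR -> -(2%:R * N ^+ 2 * RR) <= N * Sy - J * (St + V) ->
  d * LL <= Sx - Sy -> LL * d <= 5%:R * N * RR.
Proof.
move=> N1 J0 JN V0 VR R0 d1 d4 sd.
have N0 : 0 < N by lra.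
have h4 : N * (d * LL) <= N * (Sx - Sy) by rewrite ler_pM2l.
have h5 : 0 <= J * V by apply: mulr_ge0.
rewrite -(ler_pM2l N0).
have -> : N * (5%:R * N * RR) = 5%:R * (N ^+ 2 * RR) by rewrite expr2; ring.
rewrite mulrC.
have e : N * (Sx - Sy) = (N * Sx - J * St) - (N * Sy - J * (St + V)) - J * V by ring.
have h6 : 0 <= N ^+ 2 * RR by apply: mulr_ge0 => //; apply: exprn_ge0; lra.
lra.
Qed.



Lemma cut_move t Q Q' j : (t.+1 <= T)%N -> is_cuts n t Q -> EF1 v n Q ->
  is_cuts n t.+1 Q' -> EF1 v n Q' -> (j <= n)%N ->
  L * ((cut Q j - cut Q' j) + (cut Q' j - cut Q j))%:R <= 5%:R * n%:R * R.
Proof.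
move=> tT cQ ef cQ' ef' jn.
have L0' : 0 < L by exact: L0. have LR' : L <= R by exact: LR.
have := dev_bound (ltnW tT) cQ ef jn; rewrite ler_norml => /andP[d1 d2].
have := dev_bound tT cQ' ef' jn; rewrite ler_norml => /andP[d3 d4].
have eS : Spre t.+1 = Spre t + v t.+1 by rewrite /Spre big_nat_recr.
have /andP[vl vr] : L <= v t.+1 <= R by apply: Hv; lia.
have xt := cut_le_t cQ jn; have yt := cut_le_t cQ' jn.
have jn' : j%:R <= n%:R :> F by rewrite ler_nat.
have j0 : 0 <= j%:R :> F by rewrite ler0n.
have n1 : 1 <= n%:R :> F by rewrite ler1n.
rewrite eS in d3 d4.
have V0 : 0 <= v t.+1 by apply: le_trans (ltW L0') vl.
have R0 : 0 <= R by apply: le_trans (ltW L0') LR'.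
move: (cut Q j) (cut Q' j) xt yt d1 d2 d3 d4 => x y xt yt d1 d2 d3 d4.
case: (leqP x y) => xy.
  have := S_diff xy (leq_trans yt tT).
  have -> : (x - y = 0)%N by apply/eqP; rewrite subn_eq0.
  rewrite add0n; move=> sd.
  exact: (fin_arith n1 j0 jn' V0 vr R0 d1 d4 sd).
have xy' : (y <= x)%N by apply: ltnW.
have := S_diff xy' (leq_trans xt (ltnW tT)).
have -> : (y - x = 0)%N by apply/eqP; rewrite subn_eq0.
rewrite addn0; move=> sd.
exact: (fin_arith2 n1 j0 jn' V0 vr R0 d2 d3 sd).
Qed.

End Num.

End PartE.
Import PartE.

Module PartG.
Set Implicit Arguments. Unset Strict Implicit. Unset Printing Implicit Defensive.

Lemma owner_has (P P' : seq nat) g : size P = size P' -> owner P g != owner P' g ->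
  has (fun j => (g <= nth 0 P j) != (g <= nth 0 P' j)) (iota 0 (size P)).
Proof.
rewrite /owner; elim: P P' => [|x P IH] [|y P'] //= [sz].
case gx: (g <= x); case gy: (g <= y) => //= ne.
have -> : iota 1 (size P) = map S (iota 0 (size P)) by rewrite -[1]/(1 + 0) iotaDl.
rewrite has_map; exact: IH.
Qed.

Lemma count_has_sum (T : Type) (s : seq T) (js : seq nat) (q : T -> nat -> bool) :
  count (fun x => has (q x) js) s <= \sum_(j <- js) count (fun x => q x j) s.
Proof.
elim: js => [|j js IH]; first by rewrite big_nil; elim: s.
rewrite big_cons; apply: leq_trans (leq_add (leqnn _) IH).
rewrite -count_predUI; exact: leq_addr.
Qed.

Lemma count_between x y t : count (fun g => (g <= x) != (g <= y)) (iota 1 t) <= (x - y) + (y - x).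
Proof.
rewrite -size_filter.
have us : uniq (filter (fun g => (g <= x) != (g <= y)) (iota 1 t)) by rewrite filter_uniq // iota_uniq.
have sub : {subset filter (fun g => (g <= x) != (g <= y)) (iota 1 t) <=
              iota (minn x y).+1 (maxn x y - minn x y)}.
  move=> g; rewrite mem_filter !mem_iota => /andP[h _]; move: h.
  case: (leqP g x) => gx; case: (leqP g y) => gy //= _; lia.
have := uniq_leq_size us sub; rewrite size_iota.
move: (size _) => k; rewrite /maxn /minn; case: (ltnP x y) => _; lia.
Qed.

End PartG.
Import PartG.

Module PartH.
Set Implicit Arguments. Unset Strict Implicit. Unset Printing Implicit Defensive.
Import Order.TTheory GRing.Theory Num.Theory.
Local Open Scope ring_scope.

Lemma fin_arith3 (F : realFieldType) (N R : F) : 1 <= N -> 0 <= R ->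
  (N + 1) * (5%:R * N * R) <= 10%:R * N ^+ 2 * R.
Proof.
move=> N1 R0; have h : 0 <= (N - 1) * (N * R).
  by apply: mulr_ge0; [lra|apply: mulr_ge0 => //; lra].
rewrite expr2; nra.
Qed.

Section Round.
Variables (F : realFieldType) (v : nat -> F) (n T : nat) (L R : F).
Hypothesis n0 : (0 < n)%N.
Hypothesis L0 : 0 < L.
Hypothesis LR : L <= R.
Hypothesis Hv : forall g, (1 <= g <= T)%N -> L <= v g <= R.

Lemma round_bound t (Q Q' : seq nat) : (t.+1 <= T)%N -> is_cuts n t Q -> EF1 v n Q ->
  is_cuts n t.+1 Q' -> EF1 v n Q' ->
  L * (count (fun g => owner Q g != owner Q' g) (iota 1 t))%:R <= 10%:R * n%:R ^+ 2 * R.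
Proof.
move=> tT cQ ef cQ' ef'.
have szQ : size Q = n.+1 by case: cQ.
have szQ' : size Q' = n.+1 by case: cQ'.
have c1 : (count (fun g => owner Q g != owner Q' g) (iota 1 t) <=
    \sum_(j <- iota 0 n.+1) ((cut Q j - cut Q' j) + (cut Q' j - cut Q j)))%N.
  have := count_has_sum (iota 1 t) (iota 0 n.+1) (fun g j => (g <= nth 0 Q j) != (g <= nth 0 Q' j))%N.
  move=> h; apply: leq_trans (leq_trans _ h) _.
    apply: sub_count => g /= ne; have := owner_has (etrans szQ (esym szQ')) ne.
    by rewrite szQ.
  apply: leq_sum => j _; exact: count_between.
have L0' : 0 <= L by apply: ltW.
apply: le_trans (_ : L * (\sum_(j <- iota 0 n.+1) ((cut Q j - cut Q' j) + (cut Q' j - cut Q j)))%:R <= _).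
  by apply: ler_wpM2l => //; rewrite ler_nat.
rewrite natr_sum mulr_sumr.
apply: le_trans (_ : \sum_(j <- iota 0 n.+1) (5%:R * n%:R * R) <= _).
  rewrite big_seq [X in _ <= X]big_seq; apply: ler_sum => j; rewrite mem_iota => jr.
  apply: (cut_move n0 L0 LR Hv tT cQ ef cQ' ef'); by rewrite add0n ltnS in jr.
have -> : iota 0 n.+1 = index_iota 0 n.+1 by rewrite /index_iota subn0.
rewrite sumr_const_nat subn0 -(mulr_natl (5%:R * n%:R * R) n.+1) -[n.+1]addn1 natrD.
apply: fin_arith3; first by rewrite ler1n.
exact: le_trans (ltW L0) LR.
Qed.

Lemma total_bound (A : nat -> seq nat) :
  (forall t, (1 <= t <= T)%N -> is_cuts n t (A t) /\ EF1 v n (A t)) ->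
  (adjustments T A)%:R <= 10%:R * (R / L) * (n ^ 2 * T)%:R.
Proof.
move=> HA.
have key : L * (adjustments T A)%:R <= \sum_(1 <= t < T) (10%:R * n%:R ^+ 2 * R).
  rewrite /adjustments natr_sum mulr_sumr; apply: ler_sum_nat => t tr.
  have [c1 e1] := HA t ltac:(lia); have [c2 e2] := HA t.+1 ltac:(lia).
  apply: round_bound => //; lia.
rewrite sumr_const_nat -(mulr_natl (10%:R * n%:R ^+ 2 * R) (T - 1)) in key.
have R0 : 0 <= R by apply: le_trans (ltW L0) LR.
have L0' : L != 0 by rewrite gt_eqF.
have e : 10%:R * (R / L) * (n ^ 2 * T)%:R = (10%:R * n%:R ^+ 2 * R * T%:R) / L.
  by rewrite natrM natrX; field.
rewrite e ler_pdivlMr // mulrC.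
apply: le_trans key _.
rewrite mulrC; apply: ler_wpM2l.
  by apply: mulr_ge0 => //; apply: mulr_ge0 => //; apply: exprn_ge0; rewrite ler0n.
by rewrite ler_nat leq_subr.
Qed.

End Round.

End PartH.
Import PartH.

Import Order.TTheory GRing.Theory Num.Theory.
Local Open Scope ring_scope.

Theorem mainTheorem6 :
  exists C : nat,
  forall (F : realType) (n T : nat) (v : nat -> F) (L R : F),
    (0 < n)%N -> 0 < L -> L <= R ->
    (forall g, (1 <= g <= T)%N -> L <= v g <= R) ->
    forall (P : nat -> seq nat) (i : nat -> nat),
      (forall t, (1 <= t <= T)%N -> is_leximin2 v n t (P t)) ->
      (forall t, (1 <= t <= T)%N -> is_min_agent v n (P t) (i t)) ->
      let A := fun t => alg3 v n t (P t) (i t) in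
      (forall t, (1 <= t <= T)%N -> is_cuts n t (A t) /\ EF1 v n (A t)) /\
      (adjustments T A)%:R <= C%:R * (R / L) * (n ^ 2 * T)%:R.
Proof.
exists 10%N => F n T v L R n0 L0 LR Hv P i Hl Hm A.
have part1 : forall t, (1 <= t <= T)%N -> is_cuts n t (A t) /\ EF1 v n (A t).
  move=> t tr; apply: (alg3_EF1 (Hl t tr) (Hm t tr)) => g gr.
  have /andP[h _] : L <= v g <= R by apply: Hv; lia.
  exact: lt_le_trans L0 h.
split => //; exact: (total_bound n0 L0 LR Hv part1).
Qed.
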